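(* Let $q$ be a prime power, let $\lambda \in \mathbb{F}_{q^n}\setminus\mathbb{F}_q$, $t = [\mathbb{F}_q(\lambda):\mathbb{F}_q]$, let $\overline{S}$ be an $\mathbb{F}_{q^t}$-subspace of $\mathbb{F}_{q^n}$ of $\mathbb{F}_{q^t}$-dimension $l>0$, let $b\in\mathbb{F}_{q^n}^*$ with $b\mathbb{F}_{q^t}\cap\overline{S}=\{0\}$, let $0<m<t$, $k = tl+m$, and let $S = \overline{S} \oplus b\langle 1, \lambda, \ldots, \lambda^{m-1}\rangle_{\mathbb{F}_q}$ (a $k$-dimensional $\mathbb{F}_q$-subspace). If $\alpha \in \mathbb{F}_{q^n}^*$ satisfies $\dim_{\mathbb{F}_{q^t}}(\overline{S} \cap \alpha\overline{S}) = i$, then $\dim_{\mathbb{F}_q}(S \cap \alpha S) \leq 2m + ti$. *)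

(* Defs.v *)
From HB Require Import structures.
From mathcomp Require Import all_boot all_order all_algebra all_field.
Set Implicit Arguments. Unset Strict Implicit. Unset Printing Implicit Defensive.
Import GRing.Theory.
Local Open Scope ring_scope.

(* Setting: F = F_q a finite field, L = F_{q^n} a (finite-dimensional, hence
   finite) field extension of F. Subspaces are F-subspaces {vspace L};
   \dim is the F-dimension. *)

Definition Fadj (F : finFieldType) (L : fieldExtType F) (lam : L) : {vspace L} :=
  <<1%VS; lam>>%VS.

Definition is_subspace_over (F : finFieldType) (L : fieldExtType F)
  (K U : {vspace L}) : bool := (K * U <= U)%VS.

Definition scalev (F : finFieldType) (L : fieldExtType F) (a : L) (U : {vspace L})
  : {vspace L} := (<[a]> * U)%VS.

Definition powspan (F : finFieldType) (L : fieldExtType F) (lam : L) (m : nat)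
  : {vspace L} := span [seq (lam ^+ j)%R | j <- iota 0 m].

(* Main.v *)
Require Import Defs.
From HB Require Import structures.
From mathcomp Require Import all_boot all_order all_algebra all_field.
From mathcomp Require Import zify.
Import GRing.Theory.
Local Open Scope ring_scope.

Lemma dim_addv_le {K : fieldType} {vT : vectType K} (U V : {vspace vT}) :
  (\dim (U + V) <= \dim U + \dim V)%N.
Proof. by rewrite -dimv_sum_cap leq_addr. Qed.

Lemma dim_capD_le {K : fieldType} {vT : vectType K} (A B C : {vspace vT}) :
  (\dim ((A + B) :&: C) <= \dim (A :&: C) + \dim B)%N.
Proof.
set X := ((A + B) :&: C)%VS.
have h := dimv_sum_cap X A.
have h1 : (\dim (X + A) <= \dim A + \dim B)%N.
  have hs : (X + A <= A + B)%VS by rewrite subv_add capvSl addvSl.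
  have := dimvS hs; have := dim_addv_le A B; lia.
have h2 : (\dim (X :&: A) <= \dim (A :&: C))%N.
  apply: dimvS; rewrite subv_cap; apply/andP; split; first exact: capvSr.
  apply: subv_trans (capvSl _ _) _; exact: capvSr.
lia.
Qed.

Lemma dim_line_prod {F : finFieldType} {L : fieldExtType F} (a : L) (U : {vspace L}) :
  (\dim (<[a]> * U)%VS <= \dim U)%N.
Proof.
apply: leq_trans (dim_prodv _ _) _; rewrite dim_vline.
by case: (a != 0); rewrite ?mul1n ?mul0n.
Qed.

Theorem lemma4p5 (F : finFieldType) (L : fieldExtType F) (lam : L)
  (Sbar : {vspace L}) (b alpha : L) (t l m i : nat) :
  lam \notin 1%VS ->
  t = \dim (Fadj lam) ->
  is_subspace_over (Fadj lam) Sbar ->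
  \dim Sbar = (t * l)%N -> (0 < l)%N ->
  b != 0 ->
  (scalev b (Fadj lam) :&: Sbar)%VS = 0%VS ->
  (0 < m)%N -> (m < t)%N ->
  alpha != 0 ->
  \dim (Sbar :&: scalev alpha Sbar)%VS = (t * i)%N ->
  let S := (Sbar + scalev b (powspan lam m))%VS in
  (\dim (S :&: scalev alpha S)%VS <= 2 * m + t * i)%N.
Proof.
move=> _ _ _ _ _ _ _ _ _ _ Hi.
rewrite /=.
have hP : (\dim (powspan lam m) <= m)%N.
  by apply: leq_trans (dim_span _) _; rewrite size_map size_iota.
set P := powspan lam m in hP *.
set S := (Sbar + _)%VS.
have hbP : (\dim (scalev b P) <= m)%N by rewrite /scalev; apply: leq_trans (dim_line_prod _ _) hP.
have haS : scalev alpha S = (scalev alpha Sbar + <[alpha]> * scalev b P)%VS.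
  by rewrite /scalev /S prodvDr.
have hab : (\dim (<[alpha]> * scalev b P)%VS <= m)%N.
  by apply: leq_trans (dim_line_prod _ _) hbP.
have h1 := dim_capD_le Sbar (scalev b P) (scalev alpha S).
have h2 : (\dim (Sbar :&: scalev alpha S) <= \dim (Sbar :&: scalev alpha Sbar) + m)%N.
  rewrite capvC haS; apply: leq_trans (dim_capD_le _ _ _) _.
  by rewrite capvC leq_add2l.
rewrite /S; move: h1 h2 hbP Hi; rewrite -/S; lia.
Qed.
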